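(* Let $n\in\mathbb N$. Let $\varphi:C(S^1)\to B(H^2(S^1))$ be the symbol map $\varphi(f)=T_f$ and let $\varphi_n$ be its restriction to $C(S^1)_{(n)}$. Then $\varphi_n$ is a unital complete order isomorphism of $C(S^1)_{(n)}$ onto $\mathcal T_{(n)}=\{T_f: f\in C(S^1)_{(n)}\}$.
   Context: $S^1$ is the unit circle, $C(S^1)$ the continuous functions on it, $\hat f(k)$ the $k$-th Fourier coefficient. $C(S^1)_{(n)}$ is the operator system of $f\in C(S^1)$ with $\hat f(k)=0$ for $|k|\ge n$, with matrix ordering: $F\in M_p(C(S^1)_{(n)})$ positive iff $F(z)\ge 0$ for all $z\in S^1$, and unit the constant $1$. $H^2(S^1)\subseteq L^2(S^1)$ is the Hardy space (closed span of $z^k$, $k\ge0$), $P$ the orthogonal projection onto it, $M_f$ multiplication by $f$ on $L^2(S^1)$, and $T_f=PM_f|_{H^2(S^1)}$ is the Toeplitz operator with symbol $f$. $\mathcal T_{(n)}$ is an operator subsystem of $B(H^2(S^1))$. A unital complete order isomorphism is a unit-preserving linear bijection which, together with its inverse, is completely positive. *)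

(* Defs.v *)
From mathcomp Require Import all_boot all_order all_algebra complex.
Import Order.TTheory GRing.Theory Num.Theory.
From mathcomp Require Import all_classical all_reals all_analysis.
Import numFieldNormedType.Exports.
Set Implicit Arguments. Unset Strict Implicit. Unset Printing Implicit Defensive.
Local Open Scope ring_scope.

(* A function on S^1 is represented through the parametrisation
   theta |-> f(e^{i theta}), i.e. as a map R -> R[i] which is 2pi-periodic. *)
Definition circfun (R : realType) := R -> R[i].

Definition is_cont_circle (R : realType) (f : circfun R) : Prop :=
  continuous (fun t : R => complex.Re (f t)) /\ continuous (fun t : R => complex.Im (f t)) /\
  (forall t, f (t + 2 * pi) = f t).

Definition expi (R : realType) (t : R) : R[i] := Complex (cos t) (sin t).

Definition fourier (R : realType) (f : circfun R) (k : int) : R[i] :=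
  let g := fun t : R => f t * expi (- (k%:~R * t)) in
  Complex
    ((2 * pi)^-1 * Rintegral (@lebesgue_measure R) `[0, 2 * pi]%classic
                     (fun t => complex.Re (g t)))
    ((2 * pi)^-1 * Rintegral (@lebesgue_measure R) `[0, 2 * pi]%classic
                     (fun t => complex.Im (g t))).

Definition in_Cn (R : realType) (n : nat) (f : circfun R) : Prop :=
  is_cont_circle f /\ (forall k : int, (n <= `|k|)%N -> fourier f k = 0).

(* Operators on H^2(S^1) are represented by their matrices with respect to
   the orthonormal basis (z^j)_{j>=0}: entry (i,j) is <A z^j, z^i>. *)
Definition hop (R : realType) := nat -> nat -> R[i].

Definition idop (R : realType) : hop R := fun i j => (i == j)%:R.

Definition toeplitz (R : realType) (f : circfun R) : hop R :=
  fun i j => fourier f (i%:Z - j%:Z).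

(* Positivity of F in M_p(C(S^1)_(n)): F(z) >= 0 in M_p(C) for all z in S^1. *)
Definition fun_block_pos (R : realType) (p : nat)
    (F : 'I_p -> 'I_p -> circfun R) : Prop :=
  forall (t : R) (v : 'I_p -> R[i]),
    0 <= \sum_(a < p) \sum_(b < p) (v a)^* * F a b t * v b.

(* Positivity of a p x p operator matrix G in M_p(B(H^2)), i.e.
   <G xi, xi> >= 0, tested on xi in (H^2)^p with polynomial entries
   (a dense subspace; G has bounded entries). *)
Definition op_block_pos (R : realType) (p : nat) (G : 'I_p -> 'I_p -> hop R) : Prop :=
  forall (N : nat) (xi : 'I_p -> 'I_N -> R[i]),
    0 <= \sum_(a < p) \sum_(b < p) \sum_(i < N) \sum_(j < N)
           (xi a i)^* * G a b i j * xi b j.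

(* Main.v *)
Require Import Defs.
From mathcomp Require Import all_boot all_order all_algebra complex.
Import Order.TTheory GRing.Theory Num.Theory.
From mathcomp Require Import all_classical all_reals all_analysis.
From mathcomp Require Import ring lra.
Import numFieldNormedType.Exports.
Local Open Scope ring_scope.
Set Implicit Arguments. Unset Strict Implicit. Unset Printing Implicit Defensive.
Section S.
Variable R : realType.
Local Notation mu := (@lebesgue_measure R).
Implicit Types (f g : R -> R) (c : R).
Definition RI (f : R -> R) : R := Rintegral mu `[0, 2 * pi]%classic f.

Lemma pi2_gt0 : (0 : R) < 2 * pi.
Proof. by rewrite mulr_gt0 // pi_gt0. Qed.

Lemma RI_int (f : R -> R) : continuous f -> mu.-integrable `[0, 2 * pi]%classic (EFin \o f).
Proof.
move=> cf; apply: continuous_compact_integrable; first exact: segment_compact.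
exact: continuous_subspaceT.
Qed.

Lemma RID f g : continuous f -> continuous g -> RI (fun t => f t + g t) = RI f + RI g.
Proof. by move=> cf cg; rewrite /RI RintegralD //; apply: RI_int. Qed.

Lemma RIZ f c : continuous f -> RI (fun t => c * f t) = c * RI f.
Proof. by move=> cf; rewrite /RI RintegralZl //; apply: RI_int. Qed.

Lemma RIB f g : continuous f -> continuous g -> RI (fun t => f t - g t) = RI f - RI g.
Proof. by move=> cf cg; rewrite /RI RintegralB //; apply: RI_int. Qed.

Lemma RI_ge0 f : (forall t, 0 <= t <= 2 * pi -> 0 <= f t) -> 0 <= RI f.
Proof. move=> h; apply: Rintegral_ge0 => x; rewrite /= in_itv /= => /h; done. Qed.

Lemma RI_ext f g : (forall t, 0 <= t <= 2 * pi -> f t = g t) -> RI f = RI g.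
Proof. move=> h; apply: eq_Rintegral => x; rewrite inE /= in_itv /= => /h; done. Qed.

Lemma RI_cst c : RI (fun _ => c) = c * (2 * pi).
Proof.
rewrite /RI Rintegral_cst //= lebesgue_measure_itv /= lte_fin pi2_gt0 /=.
by rewrite subr0.
Qed.

End S.
Section C.
Variable R : realType.
Implicit Types (f g : R -> R) (c : R).

Lemma cD f g : continuous f -> continuous g -> continuous (fun t => f t + g t).
Proof. by move=> cf cg x; exact: (@continuousD _ _ _ f g x (cf x) (cg x)). Qed.
Lemma cM f g : continuous f -> continuous g -> continuous (fun t => f t * g t).
Proof. by move=> cf cg x; apply: cvgM; [exact: cf | exact: cg]. Qed.
Lemma cN f : continuous f -> continuous (fun t => - f t).
Proof. by move=> cf x; exact: (@continuousN _ _ _ f x (cf x)). Qed.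
Lemma cB f g : continuous f -> continuous g -> continuous (fun t => f t - g t).
Proof. by move=> cf cg; apply: cD => //; apply: cN. Qed.
Lemma cC c : continuous (fun _ : R => c).
Proof. by move=> x; exact: cvg_cst. Qed.
Lemma cI : continuous (fun t : R => t).
Proof. by move=> x. Qed.
Lemma cX f n : continuous f -> continuous (fun t => f t ^+ n).
Proof. move=> cf; elim: n => [|n IH]; first exact: cC.
by under eq_fun do rewrite exprS; apply: cM. Qed.
Lemma ccos f : continuous f -> continuous (fun t => cos (f t)).
Proof. by move=> cf x; apply: (continuous_comp (cf x)); apply: continuous_cos. Qed.
Lemma csin f : continuous f -> continuous (fun t => sin (f t)).
Proof. by move=> cf x; apply: (continuous_comp (cf x)); apply: continuous_sin. Qed.
End C.
Section Cx.
Variable R : realType.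
Local Notation C := (R[i]).
Implicit Types (x y z : C) (a b : R).

Lemma ReM x y : complex.Re (x * y) = complex.Re x * complex.Re y - complex.Im x * complex.Im y.
Proof. by case: x => ? ?; case: y. Qed.
Lemma ImM x y : complex.Im (x * y) = complex.Re x * complex.Im y + complex.Im x * complex.Re y.
Proof. by case: x => ? ?; case: y. Qed.
Lemma ReD x y : complex.Re (x + y) = complex.Re x + complex.Re y.
Proof. by case: x => ? ?; case: y. Qed.
Lemma ImD x y : complex.Im (x + y) = complex.Im x + complex.Im y.
Proof. by case: x => ? ?; case: y. Qed.
Lemma ReJ x : complex.Re (x^*) = complex.Re x.
Proof. by case: x. Qed.
Lemma ImJ x : complex.Im (x^*) = - complex.Im x.
Proof. by case: x. Qed.
Lemma Re0 : complex.Re (0 : C) = 0. Proof. by []. Qed.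
Lemma Im0 : complex.Im (0 : C) = 0. Proof. by []. Qed.
Lemma Re1 : complex.Re (1 : C) = 1. Proof. by []. Qed.
Lemma Im1 : complex.Im (1 : C) = 0. Proof. by []. Qed.
Lemma ReN x : complex.Re (- x) = - complex.Re x. Proof. by case: x. Qed.
Lemma ImN x : complex.Im (- x) = - complex.Im x. Proof. by case: x. Qed.
Lemma Re_sum (I : Type) (s : seq I) (F : I -> C) :
  complex.Re (\sum_(i <- s) F i) = \sum_(i <- s) complex.Re (F i).
Proof. elim: s => [|a s IH]; first by rewrite !big_nil. by rewrite !big_cons ReD IH. Qed.
Lemma Im_sum (I : Type) (s : seq I) (F : I -> C) :
  complex.Im (\sum_(i <- s) F i) = \sum_(i <- s) complex.Im (F i).
Proof. elim: s => [|a s IH]; first by rewrite !big_nil. by rewrite !big_cons ImD IH. Qed.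
Lemma cplx_eq x y : complex.Re x = complex.Re y -> complex.Im x = complex.Im y -> x = y.
Proof. by case: x => ? ?; case: y => ? ? /= -> ->. Qed.
Lemma ReC a : complex.Re ((a%:C)%C : C) = a. Proof. by []. Qed.
Lemma ImC a : complex.Im ((a%:C)%C : C) = 0. Proof. by []. Qed.
Lemma le0c x : (0 <= x) = (complex.Im x == 0) && (0 <= complex.Re x).
Proof. by rewrite lecE eq_sym. Qed.

Lemma expiD a b : expi (a + b) = expi a * expi b.
Proof. by apply: cplx_eq; rewrite ?ReM ?ImM /= ?cosD ?sinD // addrC. Qed.
Lemma expiN a : expi (- a) = (expi a)^*.
Proof. by apply: cplx_eq; rewrite ?ReJ ?ImJ /= ?cosN ?sinN. Qed.
Lemma expi0 : expi 0 = 1 :> C.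
Proof. by apply: cplx_eq; rewrite /= ?cos0 ?sin0. Qed.
Lemma expi_nat n a : expi (n%:R * a) = expi a ^+ n.
Proof.
elim: n => [|n IH]; first by rewrite mul0r expi0 expr0.
by rewrite -addn1 natrD mulrDl mul1r expiD IH exprD expr1.
Qed.
Lemma expiJM a : (expi a)^* * expi a = 1.
Proof.
apply: cplx_eq; rewrite ?ReM ?ImM ?ReJ ?ImJ /= ?Re1 ?Im1.
- by rewrite -(cos2Dsin2 a); ring.
- ring.
Qed.
End Cx.
Section CInt.
Variable R : realType.
Local Notation C := (R[i]).
Implicit Types (g h : R -> C) (z : C) (a : R).

Definition ccont g := continuous (fun t => complex.Re (g t)) /\ continuous (fun t => complex.Im (g t)).
Definition CI g : C := Complex (RI (fun t => complex.Re (g t))) (RI (fun t => complex.Im (g t))).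

Lemma ccontD g h : ccont g -> ccont h -> ccont (fun t => g t + h t).
Proof.
move=> [g1 g2] [h1 h2]; split.
- by under eq_fun do rewrite ReD; apply: cD.
- by under eq_fun do rewrite ImD; apply: cD.
Qed.
Lemma ccontM g h : ccont g -> ccont h -> ccont (fun t => g t * h t).
Proof.
move=> [g1 g2] [h1 h2]; split.
- by under eq_fun do rewrite ReM; apply: cB; apply: cM.
- by under eq_fun do rewrite ImM; apply: cD; apply: cM.
Qed.
Lemma ccontC z : ccont (fun _ => z).
Proof. by split; apply: cC. Qed.
Lemma ccontJ g : ccont g -> ccont (fun t => (g t)^*).
Proof.
move=> [g1 g2]; split.
- by under eq_fun do rewrite ReJ.
- by under eq_fun do rewrite ImJ; apply: cN.
Qed.
Lemma ccont_expi a : ccont (fun t => expi (a * t)).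
Proof.
have h : continuous (fun t : R => a * t) by apply: cM; [apply: cC | apply: cI].
by split; [apply: ccos | apply: csin].
Qed.
Lemma ccont_real (f : R -> R) : continuous f -> ccont (fun t => (f t)%:C%C).
Proof. by move=> cf; split => //=; apply: cC. Qed.
Lemma ccont_sum (I : Type) (s : seq I) (G : I -> R -> C) :
  (forall i, ccont (G i)) -> ccont (fun t => \sum_(i <- s) G i t).
Proof.
move=> cG; elim: s => [|a s IH].
  by under eq_fun do rewrite big_nil; apply: ccontC.
by under eq_fun do rewrite big_cons; apply: ccontD.
Qed.

Lemma CI_D g h : ccont g -> ccont h -> CI (fun t => g t + h t) = CI g + CI h.
Proof.
move=> [g1 g2] [h1 h2]; rewrite /CI; apply: cplx_eq; rewrite ?ReD ?ImD /=.
- by under eq_fun do rewrite ReD; rewrite RID.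
- by under eq_fun do rewrite ImD; rewrite RID.
Qed.
Lemma CI_Z z g : ccont g -> CI (fun t => z * g t) = z * CI g.
Proof.
move=> [g1 g2]; rewrite /CI; apply: cplx_eq; rewrite ?ReM ?ImM /=.
- by under eq_fun do rewrite ReM; rewrite RIB ?RIZ //; apply: cM => //; apply: cC.
- by under eq_fun do rewrite ImM; rewrite RID ?RIZ //; apply: cM => //; apply: cC.
Qed.
Lemma CI_sum (I : Type) (s : seq I) (G : I -> R -> C) :
  (forall i, ccont (G i)) -> CI (fun t => \sum_(i <- s) G i t) = \sum_(i <- s) CI (G i).
Proof.
move=> cG; elim: s => [|a s IH].
  rewrite big_nil; under eq_fun do rewrite big_nil.
  by rewrite /CI /= RI_cst mul0r.
rewrite big_cons -IH -CI_D //; last exact: ccont_sum.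
by under eq_fun do rewrite big_cons.
Qed.
Lemma CI_ext g h : (forall t, 0 <= t <= 2 * pi -> g t = h t) -> CI g = CI h.
Proof. by move=> e; rewrite /CI; congr Complex; apply: RI_ext => t /e ->. Qed.
Lemma CI_ge0 g : (forall t, 0 <= t <= 2 * pi -> 0 <= g t) -> 0 <= CI g.
Proof.
move=> p; rewrite le0c /=; apply/andP; split.
- apply/eqP; rewrite (@RI_ext _ _ (fun _ => 0)) ?RI_cst ?mul0r // => t /p.
  by rewrite le0c => /andP[/eqP].
- by apply: RI_ge0 => t /p; rewrite le0c => /andP[].
Qed.
End CInt.
Section Four.
Variable R : realType.
Local Notation C := (R[i]).
Implicit Types (g h : R -> C) (z : C) (a : R).

Definition cc : C := ((2 * pi)^-1)%:C%C.

Lemma fourierE h k : fourier h k = cc * CI (fun t => h t * expi (- (k%:~R * t))).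
Proof. by apply: cplx_eq; rewrite ?ReM ?ImM /= /RI; ring. Qed.

Definition qf N (x : 'I_N -> C) (t : R) : C := \sum_(i < N) x i * expi (i%:R * t).

Lemma ccont_qf N (x : 'I_N -> C) : ccont (qf x).
Proof. by apply: ccont_sum => i; apply: ccontM; [apply: ccontC | apply: ccont_expi]. Qed.

Lemma intB_R (i j : nat) : ((i%:Z - j%:Z)%:~R : R) = i%:R - j%:R.
Proof. by rewrite intrD intrN. Qed.

Lemma toeplitz_form h N (x y : 'I_N -> C) : ccont h ->
  \sum_(i < N) \sum_(j < N) (x i)^* * fourier h (i%:Z - j%:Z) * y j =
  cc * CI (fun t => (qf x t)^* * h t * qf y t).
Proof.
move=> ch.
have ce : forall (i j : 'I_N), ccont (fun t => h t * expi (- (((i%:Z - j%:Z)%:~R : R) * t))).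
  move=> i j; apply: ccontM => //.
  by under eq_fun do rewrite -mulNr; apply: ccont_expi.
rewrite (@CI_ext _ _ (fun t => \sum_(i < N) \sum_(j < N) ((x i)^* * y j) *
     (h t * expi (- (((i%:Z - j%:Z)%:~R : R) * t))))); last first.
  move=> t _; rewrite /qf rmorph_sum /= mulr_suml mulr_suml; apply: eq_bigr => i _.
  rewrite mulr_sumr; apply: eq_bigr => j _.
  rewrite intB_R mulrBl opprB addrC expiD expiN !rmorphM /=.
  ring.
rewrite CI_sum; last first.
  by move=> i; apply: ccont_sum => j; apply: ccontM; [apply: ccontC | apply: ce].
rewrite mulr_sumr; apply: eq_bigr => i _.
rewrite CI_sum; last first.
  by move=> j; apply: ccontM; [apply: ccontC | apply: ce].
rewrite mulr_sumr; apply: eq_bigr => j _.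
by rewrite CI_Z // fourierE; ring.
Qed.
End Four.
Arguments cc {R}.
Section IntS.
Variable R : realType.
Local Notation mu := (@lebesgue_measure R).
Implicit Types (f g : R -> R) (c : R).
Definition Int f := mu.-integrable `[0, 2 * pi]%classic (EFin \o f).

Lemma Int_D f g : Int f -> Int g -> Int (fun t => f t + g t).
Proof.
move=> hf hg; apply: (eq_integrable _ _ _ _ (integrableD _ hf hg)) => //.
Qed.
Lemma Int_Z c f : Int f -> Int (fun t => c * f t).
Proof.
move=> hf; apply: (eq_integrable _ _ _ _ (integrableZl _ c hf)) => //.
Qed.
Lemma Int_B f g : Int f -> Int g -> Int (fun t => f t - g t).
Proof.
move=> hf hg; apply: (eq_integrable _ _ _ _ (integrableB _ hf hg)) => //.
Qed.
Lemma Int_indic (a b : R) : Int (\1_(`[a, b]%classic)).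
Proof.
apply: (@integrableS _ _ _ _ setT) => //.
exact: integrable_indic_itv.
Qed.
Lemma RI_D f g : Int f -> Int g -> RI (fun t => f t + g t) = RI f + RI g.
Proof. by move=> cf cg; rewrite /RI RintegralD. Qed.
Lemma RI_Z f c : Int f -> RI (fun t => c * f t) = c * RI f.
Proof. by move=> cf; rewrite /RI RintegralZl. Qed.
Lemma RI_B f g : Int f -> Int g -> RI (fun t => f t - g t) = RI f - RI g.
Proof. by move=> cf cg; rewrite /RI RintegralB. Qed.
Lemma RI_le f g : Int f -> Int g -> (forall t, 0 <= t <= 2 * pi -> f t <= g t) -> RI f <= RI g.
Proof. by move=> cf cg h; apply: le_Rintegral => // x; rewrite /= in_itv /= => /h. Qed.
Lemma RI_indic (a b : R) : 0 <= a -> a <= b -> b <= 2 * pi -> RI (\1_(`[a, b]%classic)) = b - a.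
Proof.
move=> a0 ab b2; rewrite /RI /Rintegral integral_indic //.
rewrite (_ : (_ `&` _)%classic = `[a, b]%classic); last first.
  apply/seteqP; split => x /=; first by case.
  move=> h; split => //; move: h; rewrite !in_itv /= => /andP[h1 h2].
  by rewrite (le_trans a0 h1) (le_trans h2 b2).
have := @lebesgue_measure_itv R `[a, b].
rewrite le_eqVlt in ab; case/predU1P: ab => [<-|ab].
  by rewrite /= lte_fin ltxx subrr => e; apply: (@eq_trans _ _ (fine (lebesgue_measure (`[a, a]%classic : set R)))) => //; rewrite e.
rewrite /= lte_fin ab => e; apply: (@eq_trans _ _ (fine (lebesgue_measure (`[a, b]%classic : set R)))).
  by [].
by rewrite e.
Qed.
End IntS.
Section Trig.
Variable R : realType.
Implicit Types (a b s : R).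

Lemma cos_anti a b : 0 <= a -> a <= b -> b <= pi -> cos b <= cos a.
Proof.
move=> a0 ab bp.
have pi0 := @pi_gt0 R.
rewrite leNgt ltr_cos ?in_itv /= ?a0 ?(le_trans ab bp) ?(le_trans a0 ab) ?bp //.
by rewrite -leNgt.
Qed.

Lemma cos2piB a : cos (2 * pi - a) = cos a.
Proof.
by rewrite cosB mulr_natl cos2pi sin2pi mul1r mul0r addr0.
Qed.

Lemma cos_le_far e s : 0 < e -> e <= pi -> e <= `|s| -> `|s| <= 2 * pi - e -> cos s <= cos e.
Proof.
move=> e0 ep h1 h2; rewrite -cos_norm.
have pi0 := @pi_gt0 R.
case: (lerP `|s| pi) => hs.
  by apply: cos_anti => //; apply: ltW.
rewrite -cos2piB; apply: cos_anti; lra.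
Qed.

Lemma cos_ge_near e s : `|s| <= e -> e <= pi -> cos e <= cos s.
Proof.
move=> h1 h2; rewrite -[cos s]cos_norm; apply: cos_anti => //.
Qed.
End Trig.
Section Kern.
Variable R : realType.
Local Notation C := (R[i]).

Definition Kern (M : nat) (t1 t : R) : R := (2 + 2 * cos (t - t1)) ^+ M.
Definition wv (M : nat) (t1 : R) : 'I_M.+1 -> C := fun j => ('C(M, j))%:R * expi (- (j%:R * t1)).
Arguments wv : clear implicits.

Lemma qf_wv M t1 t : qf (wv M t1) t = (1 + expi (t - t1)) ^+ M.
Proof.
rewrite addrC exprD1n /qf; apply: eq_bigr => j _.
by rewrite /wv -expi_nat mulrBr addrC expiD -mulr_natl; ring.
Qed.

Lemma Kern_eq M t1 t : (qf (wv M t1) t)^* * qf (wv M t1) t = ((Kern M t1 t)%:C)%C.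
Proof.
rewrite qf_wv /Kern !rmorphXn -exprMn /=; congr (_ ^+ M).
apply: cplx_eq; rewrite ?ReM ?ImM ?ReJ ?ImJ ?ReD ?ImD /= ?Re1 ?Im1.
- by have h := cos2Dsin2 (t - t1); rewrite !expr2 in h; nra.
- ring.
Qed.

Lemma Kern_ge0 M t1 t : 0 <= Kern M t1 t.
Proof. by rewrite /Kern exprn_ge0 //; have := cos_geN1 (t - t1); lra. Qed.

Lemma Kern_cont M t1 : continuous (Kern M t1).
Proof.
apply: cX; apply: cD; first exact: cC.
by apply: cM; first exact: cC; apply: ccos; apply: cB; [apply: cI | apply: cC].
Qed.

Lemma powle (x y : R) n : 0 <= x -> x <= y -> x ^+ n <= y ^+ n.
Proof. by move=> x0 xy; rewrite lerXn2r // nnegrE (le_trans x0 xy). Qed.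

Lemma bernoulli (x : R) n : 0 <= x -> 1 + n%:R * x <= (1 + x) ^+ n.
Proof.
move=> x0; elim: n => [|n IH]; first by rewrite mul0r addr0 expr0.
rewrite exprS -natr1 mulrDl mul1r.
have h : 0 <= (1 + x) ^+ n by rewrite exprn_ge0 //; lra.
have h2 : 0 <= n%:R * x by rewrite mulr_ge0.
nra.
Qed.
End Kern.
Arguments wv {R} M%_nat t1 _.
Section Peak.
Variable R : realType.

Lemma min2 (a b : R) : 0 < a -> 0 < b -> exists2 c, 0 < c & c <= a /\ c <= b.
Proof.
move=> a0 b0; case: (lerP a b) => h; first by exists a.
by exists b => //; split => //; apply: ltW.
Qed.

Lemma peak (u : R -> R) (t1 : R) : continuous u -> 0 < t1 -> t1 < 2 * pi -> u t1 < 0 ->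
  exists M, RI (fun t => Kern M t1 t * u t) < 0.
Proof.
move=> cu t10 t12 ut1.
have pi0 := @pi_gt0 R.
pose d := - u t1 / 2.
have d0 : 0 < d by rewrite /d; lra.
have [e0 e0p He] : exists2 e, 0 < e & forall t, `|t - t1| < e -> u t < - d.
  have := cu t1; move/cvgrPdist_lt => /(_ d d0) /nbhs_ballP [e /= ep He].
  exists e => // t ht.
  have : ball t1 e t by rewrite -ball_normE /= distrC.
  move=> /He /=; rewrite ltr_norml => /andP[h1 h2]; rewrite /d in h1 h2 *; lra.
have [Mb Mb0 HM] : exists2 Mb, 0 <= Mb & forall t, 0 <= t <= 2 * pi -> `|u t| <= Mb.
  have cnu : continuous (fun t => `|u t|).
    by move=> x; apply: (continuous_comp (cu x)); apply: norm_continuous.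
  have [c _ Hc] := EVT_max (ltW (pi2_gt0 R)) (continuous_subspaceT cnu).
  by exists `|u c| => // t ht; apply: Hc; rewrite in_itv /=.
have [c1 c1p [c1a c1b]] := @min2 (e0 / 2) t1 ltac:(lra) t10.
have [c2 c2p [c2a c2b]] := @min2 c1 (2 * pi - t1) c1p ltac:(lra).
have [η η0 [ηa ηpi]] := @min2 c2 (pi / 2) c2p ltac:(lra).
have ηe : η < e0 by lra.
have ηt1 : η <= t1 by lra.
have ηt2 : η <= 2 * pi - t1 by lra.
pose A := 2 + 2 * cos (η / 2).
pose B := 2 + 2 * cos η.
have cB : 0 <= cos η by apply: cos_ge0_pihalf; lra.
have BA : B < A.
  have : cos η < cos (η / 2) by rewrite ltr_cos ?in_itv /=; lra.
  rewrite /A /B; lra.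
have B2 : 2 <= B by rewrite /B; lra.
pose a1 := t1 - η / 2.
pose b1 := t1 + η / 2.
pose g M t := Mb * B ^+ M - (d * A ^+ M + Mb * B ^+ M) * \1_(`[a1, b1]%classic) t.
have key : forall M t, 0 <= t <= 2 * pi -> Kern M t1 t * u t <= g M t.
  move=> M t ht; rewrite /g indicE.
  have Kge := Kern_ge0 M t1 t.
  have BM0 : 0 <= B ^+ M by rewrite exprn_ge0 //; lra.
  have AM0 : 0 <= A ^+ M by rewrite exprn_ge0 //; lra.
  have MBM : 0 <= Mb * B ^+ M by rewrite mulr_ge0.
  case: (boolP (t \in `[a1, b1]%classic)) => hI.
    rewrite mulr1; move: hI; rewrite inE /= in_itv /= => /andP[h1 h2].
    have hs : `|t - t1| <= η / 2 by rewrite ler_norml; rewrite /a1 /b1 in h1 h2; lra.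
    have ut : u t < - d by apply: He; lra.
    have KA : A ^+ M <= Kern M t1 t.
      apply: powle; first by rewrite /A; have := cos_geN1 (η / 2); lra.
      have := cos_ge_near hs ltac:(lra); rewrite /A; lra.
    have p1 : 0 <= (Kern M t1 t - A ^+ M) * d by rewrite mulr_ge0 //; lra.
    have p2 : 0 <= Kern M t1 t * (- d - u t) by rewrite mulr_ge0 //; lra.
    nra.
  rewrite mulr0 subr0.
  case: (ltrP `|t - t1| η) => hs.
    have ut : u t < - d by apply: He; lra.
    have : Kern M t1 t * u t <= 0 by rewrite mulr_ge0_le0 //; lra.
    lra.
  have hs2 : `|t - t1| <= 2 * pi - η by rewrite ler_norml; lra.
  have KB : Kern M t1 t <= B ^+ M.
    apply: powle; first by have := cos_geN1 (t - t1); lra.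
    have := cos_le_far η0 ltac:(lra) hs hs2; rewrite /B; lra.
  have uM : u t <= Mb by apply: le_trans (HM t ht); apply: ler_norm.
  have p1 : 0 <= Kern M t1 t * (Mb - u t) by rewrite mulr_ge0 //; lra.
  have p2 : 0 <= (B ^+ M - Kern M t1 t) * Mb by rewrite mulr_ge0 //; lra.
  nra.
have intKu M : Int (fun t => Kern M t1 t * u t).
  by apply: RI_int; apply: cM => //; apply: Kern_cont.
have intg M : Int (g M).
  apply: Int_B; first by apply: RI_int; apply: cC.
  by apply: Int_Z; apply: Int_indic.
have RIg M : RI (g M) = Mb * B ^+ M * (2 * pi) - (d * A ^+ M + Mb * B ^+ M) * η.
  rewrite /g RI_B; last 2 first.
  - by apply: RI_int; apply: cC.
  - by apply: Int_Z; apply: Int_indic.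
  rewrite RI_cst RI_Z; last by apply: Int_indic.
  rewrite RI_indic /a1 /b1; try lra.
have le M : RI (fun t => Kern M t1 t * u t) <= RI (g M) by apply: RI_le => //; apply: key.
pose r := A / B.
have B0 : 0 < B by lra.
have r1 : 1 < r by rewrite /r ltr_pdivlMr //; lra.
pose X := Mb * (2 * pi) / (d * η * (r - 1)).
have dη0 : 0 < d * η * (r - 1) by rewrite !mulr_gt0 //; lra.
have X0 : 0 <= X by rewrite /X divr_ge0 //; [rewrite mulr_ge0 //; lra | lra].
pose M := Num.Def.archi_bound X.
have XM : X < M%:R by apply: archi_boundP.
exists M.
apply: (le_lt_trans (le M)); rewrite RIg.
have hX : X * (d * η * (r - 1)) = Mb * (2 * pi) by rewrite /X divfK //; lra.
have h1 : Mb * (2 * pi) < M%:R * (d * η * (r - 1)).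
  by rewrite -hX ltr_pM2r.
have h2 : 1 + M%:R * (r - 1) <= r ^+ M.
  have := @bernoulli R (r - 1) M ltac:(lra).
  by have -> : 1 + (r - 1) = r by ring.
have AM : A ^+ M = r ^+ M * B ^+ M.
  by rewrite -exprMn /r divfK //; lra.
have BM : 0 < B ^+ M by rewrite exprn_gt0.
rewrite AM.
have dη : 0 < d * η by rewrite mulr_gt0.
have p : d * η * (1 + M%:R * (r - 1)) <= d * η * r ^+ M by rewrite ler_pM2l.
have hQ : Mb * (2 * pi) < d * η * r ^+ M by lra.
have f1 : 0 < B ^+ M * (d * η * r ^+ M - Mb * (2 * pi)) by rewrite mulr_gt0 //; lra.
have f2 : 0 <= Mb * B ^+ M * η by rewrite !mulr_ge0 //; lra.
lra.
Qed.
End Peak.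
Section PosK.
Variable R : realType.

Lemma per_nat (u : R -> R) : (forall t, u (t + 2 * pi) = u t) ->
  forall n t, u (t + n%:R * (2 * pi)) = u t.
Proof.
move=> hu; elim => [|n IH] t; first by rewrite mul0r addr0.
by rewrite -natr1 mulrDl mul1r addrA hu IH.
Qed.

Lemma per_int (u : R -> R) : (forall t, u (t + 2 * pi) = u t) ->
  forall (k : int) t, u (t - k%:~R * (2 * pi)) = u t.
Proof.
move=> hu [n|n] t.
  have -> : (Posz n)%:~R = n%:R :> R by [].
  by rewrite -(per_nat hu n (t - n%:R * (2 * pi))) subrK.
by rewrite NegzE mulrNz mulNr opprK per_nat.
Qed.

Lemma exists_t1 (u : R -> R) t : continuous u -> (forall t, u (t + 2 * pi) = u t) -> u t < 0 ->
  exists t1, [/\ 0 < t1, t1 < 2 * pi & u t1 < 0].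
Proof.
move=> cu hu ut.
have pi0 := @pi_gt0 R.
have p2 := pi2_gt0 R.
pose k := Num.floor (t / (2 * pi)).
pose s := t - k%:~R * (2 * pi).
have us : u s = u t by apply: per_int.
have k1 : k%:~R <= t / (2 * pi) by rewrite -floor_ge_int.
have k2 : t / (2 * pi) < k%:~R + 1.
  have := floor_lt_int (t / (2 * pi)) (k + 1); rewrite ltzD1 lexx => /esym.
  by rewrite intrD.
have tx : t = t / (2 * pi) * (2 * pi) by rewrite divfK //; lra.
have s0 : 0 <= s.
  rewrite /s {1}tx -mulrBl mulr_ge0 //; lra.
have s2 : s < 2 * pi.
  rewrite /s {1}tx -mulrBl -[X in _ < X]mul1r ltr_pM2r //; lra.
rewrite le_eqVlt in s0; case/predU1P: s0 => [s0|s0].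
  have := cu s; move/cvgrPdist_lt => /(_ (- u t) ltac:(lra)) /nbhs_ballP [e /= ep He].
  have [c cp [c1 c2]] := @min2 R (e / 2) pi ltac:(lra) pi0.
  exists c; split => //; first lra.
  have : ball s e c by rewrite -ball_normE /= -s0 sub0r normrN gtr0_norm //; lra.
  move=> /He /=; rewrite ltr_norml us => /andP[h1 h2]; lra.
by exists s; split => //; rewrite us.
Qed.

Lemma pos_from_kern (u : R -> R) : continuous u -> (forall t, u (t + 2 * pi) = u t) ->
  (forall t1 M, 0 <= RI (fun t => Kern M t1 t * u t)) -> forall t, 0 <= u t.
Proof.
move=> cu hu hK t; rewrite leNgt; apply/negP => ut.
have [t1 [h1 h2 h3]] := exists_t1 cu hu ut.
have [M HM] := peak cu h1 h2 h3.
by have := hK t1 M; rewrite leNgt HM.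
Qed.
End PosK.
Section Der.
Variable R : realType.
Lemma der_lin (a x : R) : is_derive x 1 (fun t : R => a * t) a.
Proof.
have h := @is_deriveZ R R^o R^o id a x 1 1 (is_derive_id _ _).
apply: (is_derive_eq h); rewrite /GRing.scale /=; exact: mulr1.
Qed.
Lemma der_sin (a x : R) : a != 0 -> is_derive x 1 (fun t : R => a^-1 * sin (a * t)) (cos (a * x)).
Proof.
move=> a0.
have h1 := @is_derive1_comp R sin (fun t => a * t) x (cos (a * x)) a (is_derive_sin _) (der_lin a x).
have h2 := @is_deriveZ R R^o R^o _ a^-1 x 1 _ h1.
apply: (is_derive_eq h2); rewrite /GRing.scale /=.
by rewrite mulrC -mulrA mulfV // mulr1.
Qed.
Lemma der_cos (a x : R) : a != 0 -> is_derive x 1 (fun t : R => (- a^-1) * cos (a * t)) (sin (a * x)).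
Proof.
move=> a0.
have h1 := @is_derive1_comp R cos (fun t => a * t) x (- sin (a * x)) a (is_derive_cos _) (der_lin a x).
have h2 := @is_deriveZ R R^o R^o _ (- a^-1) x 1 _ h1.
apply: (is_derive_eq h2); rewrite /GRing.scale /=.
by rewrite mulNr mulNr mulrN opprK mulrCA mulVf // mulr1.
Qed.
End Der.
Section FTC.
Variable R : realType.
Local Notation C := (R[i]).

Lemma RI_FTC (f F : R -> R) : (forall x : R, is_derive x 1 F (f x)) -> continuous f ->
  RI f = F (2 * pi) - F 0.
Proof.
move=> dF cf.
have cF : continuous F.
  move=> x; apply/differentiable_continuous; rewrite -derivable1_diffP.
  exact: (@ex_derive _ _ _ _ _ _ _ (dF x)).
have h1 : derivable_oo_LRcontinuous F 0 (2 * pi).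
  split.
  + by move=> x _; exact: (@ex_derive _ _ _ _ _ _ _ (dF x)).
  + by apply: cvg_at_right_filter; apply: cF.
  + by apply: cvg_at_left_filter; apply: cF.
have h2 : {in `]0, 2 * pi[, derive1 F =1 f}.
  by move=> x _; rewrite derive1E; exact: (@derive_val _ _ _ _ _ _ _ (dF x)).
have e := @continuous_FTC2 R f F 0 (2 * pi) (pi2_gt0 R) (continuous_subspaceT cf) h1 h2.
by rewrite /RI /Rintegral e.
Qed.

Lemma int_per (k : int) : sin ((k%:~R : R) * (2 * pi)) = 0 /\ cos ((k%:~R : R) * (2 * pi)) = 1.
Proof.
have hs : forall t : R, sin (t + 2 * pi) = sin t by move=> t; rewrite mulr_natl sinD2pi.
have hc : forall t : R, cos (t + 2 * pi) = cos t by move=> t; rewrite mulr_natl cosD2pi.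
have := per_int hs k 0; have := per_int hc k 0.
rewrite !sub0r sinN cosN sin0 cos0 => -> /eqP; rewrite oppr_eq0 => /eqP ->.
by [].
Qed.

Lemma CI_expi (k : int) : CI (fun t => expi ((k%:~R : R) * t)) = ((k == 0)%:R * (2 * pi))%:C%C.
Proof.
have [->|k0] := eqVneq k 0.
  rewrite /CI /=; apply: cplx_eq => /=.
  - by under [in LHS]eq_fun do rewrite mul0r cos0; rewrite RI_cst mul1r.
  - by under [in LHS]eq_fun do rewrite mul0r sin0; rewrite RI_cst mul0r.
have a0 : (k%:~R : R) != 0 by rewrite intr_eq0.
have [s1 c1] := int_per k.
rewrite /CI /=; apply: cplx_eq => /=.
- rewrite (RI_FTC (fun x => der_sin x a0)); last by apply: ccos; apply: cM; [apply: cC | apply: cI].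
  by rewrite s1 !mulr0 sin0 mulr0 subrr mul0r.
- rewrite (RI_FTC (fun x => der_cos x a0)); last by apply: csin; apply: cM; [apply: cC | apply: cI].
  by rewrite c1 mulr0 cos0 subrr.
Qed.
End FTC.
Section Main.
Variable R : realType.
Local Notation C := (R[i]).

Lemma cc_gt0 : 0 < (2 * pi)^-1 :> R.
Proof. by rewrite invr_gt0 pi2_gt0. Qed.

Lemma kern_form (G : R -> C) M t1 : ccont G ->
  \sum_(i < M.+1) \sum_(j < M.+1) (wv M t1 i)^* * fourier G (i%:Z - j%:Z) * wv M t1 j
   = cc * Complex (RI (fun t => Kern M t1 t * complex.Re (G t)))
                  (RI (fun t => Kern M t1 t * complex.Im (G t))).
Proof.
move=> cG; rewrite toeplitz_form //; congr (_ * _); rewrite /CI; congr Complex.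
- by apply: RI_ext => t _; rewrite mulrAC Kern_eq ReM /=; ring.
- by apply: RI_ext => t _; rewrite mulrAC Kern_eq ImM /=; ring.
Qed.

Lemma cc_mul_ge0 (z : C) : 0 <= cc * z -> complex.Im z = 0 /\ 0 <= complex.Re z.
Proof.
have c0 := cc_gt0; rewrite le0c ReM ImM /= !mul0r subr0 addr0 => /andP[/eqP h1 h2].
split; first by move: h1 => /eqP; rewrite mulf_eq0 invr_eq0 (gt_eqF (pi2_gt0 R)) => /eqP.
by rewrite -(pmulr_rge0 _ c0).
Qed.

Lemma cc_mul_eq0 (z : C) : cc * z = 0 -> z = 0.
Proof.
move/eqP; rewrite mulf_eq0 => /orP[|/eqP //].
move=> /eqP h; have := congr1 (@complex.Re R) h; rewrite /cc /= => /eqP.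
by rewrite invr_eq0 (gt_eqF (pi2_gt0 R)).
Qed.

Lemma zero_from_kern (u : R -> R) : continuous u -> (forall t, u (t + 2 * pi) = u t) ->
  (forall t1 M, RI (fun t => Kern M t1 t * u t) = 0) -> forall t, u t = 0.
Proof.
move=> cu hu hK t; apply/eqP; rewrite eq_le; apply/andP; split.
- rewrite -oppr_ge0; apply: (@pos_from_kern R (fun t => - u t)) => //.
  + exact: cN.
  + by move=> s; rewrite hu.
  + move=> t1 M; rewrite (@RI_ext _ _ (fun t => -1 * (Kern M t1 t * u t))).
      by rewrite RI_Z ?hK ?mulr0 //; apply: RI_int; apply: cM => //; apply: Kern_cont.
    by move=> s _; ring.
- apply: pos_from_kern => // t1 M; rewrite hK //.
Qed.

Lemma ccont_Cn n (f : R -> C) : in_Cn n f -> ccont f.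
Proof. by move=> [[c1 [c2 _]] _]; split. Qed.

Lemma fourier_lin (f g : R -> C) c k : ccont f -> ccont g ->
  fourier (fun t => c * f t + g t) k = c * fourier f k + fourier g k.
Proof.
move=> cf cg; rewrite !fourierE.
have ce : ccont (fun t : R => expi (- ((k%:~R : R) * t))).
  by under eq_fun do rewrite -mulNr; apply: ccont_expi.
rewrite (@CI_ext _ _ (fun t => c * (f t * expi (- (k%:~R * t))) + g t * expi (- (k%:~R * t)))); last first.
  by move=> t _; ring.
have h1 : ccont (fun t => f t * expi (- ((k%:~R : R) * t))) by apply: ccontM.
have h2 : ccont (fun t => g t * expi (- ((k%:~R : R) * t))) by apply: ccontM.
have h3 : ccont (fun t => c * (f t * expi (- ((k%:~R : R) * t)))) by apply: ccontM => //; apply: ccontC.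
by rewrite CI_D // CI_Z //; ring.
Qed.

Lemma uniq_fourier (h : R -> C) : ccont h -> (forall t, h (t + 2 * pi) = h t) ->
  (forall k, fourier h k = 0) -> forall t, h t = 0.
Proof.
move=> ch hp h0.
have E : forall t1 M, Complex (RI (fun t => Kern M t1 t * complex.Re (h t)))
                  (RI (fun t => Kern M t1 t * complex.Im (h t))) = 0.
  move=> t1 M; apply: cc_mul_eq0; rewrite -kern_form //.
  by rewrite big1 // => i _; rewrite big1 // => j _; rewrite h0 mulr0 mul0r.
case: ch => c1 c2 t; apply: cplx_eq.
- apply: (zero_from_kern c1) => [s|t1 M]; first by rewrite hp.
  by have := E t1 M; case.
- apply: (zero_from_kern c2) => [s|t1 M]; first by rewrite hp.
  by have := E t1 M; case.
Qed.

End Main.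
Section Final.
Variable R : realType.
Local Notation C := (R[i]).

Lemma fourier0 k : fourier (fun _ : R => 0 : C) k = 0.
Proof.
rewrite fourierE (@CI_ext _ _ (fun t => 0 * expi (- ((k%:~R : R) * t)))); last first.
  by move=> t _; rewrite !mul0r.
rewrite CI_Z ?mul0r ?mulr0 //.
by under eq_fun do rewrite -mulNr; apply: ccont_expi.
Qed.

Lemma fourierZ (H : R -> C) c k : ccont H -> fourier (fun t => c * H t) k = c * fourier H k.
Proof.
move=> cH; have := fourier_lin c k cH (ccontC 0).
rewrite fourier0 addr0 => <-.
by have -> : (fun t => c * H t + 0) = (fun t => c * H t) by apply/funext => t; rewrite addr0.
Qed.

Lemma fourier_sum (I : Type) (s : seq I) (H : I -> R -> C) k : (forall a, ccont (H a)) ->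
  fourier (fun t => \sum_(a <- s) H a t) k = \sum_(a <- s) fourier (H a) k.
Proof.
move=> cH; elim: s => [|a s IH].
  rewrite big_nil.
  have -> : (fun t => \sum_(a <- [::]) H a t) = (fun _ => 0) by apply/funext => t; rewrite big_nil.
  exact: fourier0.
rewrite big_cons -IH -[fourier (H a) k]mul1r -fourier_lin //; last exact: ccont_sum.
have -> : (fun t => \sum_(j <- a :: s) H j t) = (fun t => 1 * H a t + \sum_(j <- s) H j t).
  by apply/funext => t; rewrite big_cons mul1r.
by [].
Qed.

Lemma cc_ge0 : 0 <= (cc : C).
Proof. by rewrite le0c /= eqxx /= ltW // cc_gt0. Qed.

Lemma cp_fwd p (F : 'I_p -> 'I_p -> R -> C) : (forall a b, ccont (F a b)) ->
  fun_block_pos F -> op_block_pos (fun a b => toeplitz (F a b)).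
Proof.
move=> cF hf N xi; rewrite /toeplitz.
have cg : forall a b, ccont (fun t => (qf (xi a) t)^* * F a b t * qf (xi b) t).
  by move=> a b; apply: ccontM; [apply: ccontM => //; apply: ccontJ |]; apply: ccont_qf.
have E : \sum_(a < p) \sum_(b < p) \sum_(i < N) \sum_(j < N)
       (xi a i)^* * fourier (F a b) (i%:Z - j%:Z) * xi b j =
    cc * CI (fun t => \sum_(a < p) \sum_(b < p) (qf (xi a) t)^* * F a b t * qf (xi b) t).
  rewrite CI_sum; last by move=> a; apply: ccont_sum.
  rewrite mulr_sumr; apply: eq_bigr => a _.
  rewrite CI_sum // mulr_sumr; apply: eq_bigr => b _.
  by rewrite toeplitz_form.
rewrite E; apply: mulr_ge0; first exact: cc_ge0.
by apply: CI_ge0 => s _; apply: hf.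
Qed.

Lemma cp_back p (F : 'I_p -> 'I_p -> R -> C) : (forall a b, ccont (F a b)) ->
  (forall a b t, F a b (t + 2 * pi) = F a b t) ->
  op_block_pos (fun a b => toeplitz (F a b)) -> fun_block_pos F.
Proof.
move=> cF pF hop t v.
pose G s := \sum_(a < p) \sum_(b < p) ((v a)^* * v b) * F a b s.
have -> : \sum_(a < p) \sum_(b < p) (v a)^* * F a b t * v b = G t.
  by apply: eq_bigr => a _; apply: eq_bigr => b _; ring.
have cG : ccont G.
  by apply: ccont_sum => a; apply: ccont_sum => b; apply: ccontM => //; apply: ccontC.
have pG : forall s, G (s + 2 * pi) = G s.
  by move=> s; apply: eq_bigr => a _; apply: eq_bigr => b _; rewrite pF.
have fG : forall k, fourier G k = \sum_(a < p) \sum_(b < p) ((v a)^* * v b) * fourier (F a b) k.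
  move=> k; rewrite fourier_sum; last first.
    by move=> a; apply: ccont_sum => b; apply: ccontM => //; apply: ccontC.
  apply: eq_bigr => a _; rewrite fourier_sum; last first.
    by move=> b; apply: ccontM => //; apply: ccontC.
  by apply: eq_bigr => b _; rewrite fourierZ.
have H : forall t1 M, 0 <= cc * Complex (RI (fun t => Kern M t1 t * complex.Re (G t)))
                  (RI (fun t => Kern M t1 t * complex.Im (G t))).
  move=> t1 M; rewrite -kern_form //.
  have := hop M.+1 (fun a i => v a * wv M t1 i); rewrite /toeplitz.
  suff -> : \sum_(i < M.+1) \sum_(j < M.+1) (wv M t1 i)^* * fourier G (i%:Z - j%:Z) * wv M t1 j =
    \sum_(a < p) \sum_(b < p) \sum_(i < M.+1) \sum_(j < M.+1)
      (v a * wv M t1 i)^* * fourier (F a b) (i%:Z - j%:Z) * (v b * wv M t1 j) by [].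
  under eq_bigr => i _ do under eq_bigr => j _ do
    rewrite fG mulr_sumr mulr_suml.
  under eq_bigr => i _ do under eq_bigr => j _ do under eq_bigr => a _ do
    rewrite mulr_sumr mulr_suml.
  under eq_bigr => i _ do rewrite exchange_big.
  rewrite exchange_big.
  apply: eq_bigr => a _.
  under eq_bigr => i _ do rewrite exchange_big.
  rewrite exchange_big.
  apply: eq_bigr => b _; apply: eq_bigr => i _; apply: eq_bigr => j _.
  rewrite !rmorphM /=; ring.
have [c1 c2] := cG.
have hIm : forall s, complex.Im (G s) = 0.
  apply: (zero_from_kern c2) => [s|t1 M]; first by rewrite pG.
  by have [] := cc_mul_ge0 (H t1 M).
have hRe : forall s, 0 <= complex.Re (G s).
  apply: (pos_from_kern c1) => [s|t1 M]; first by rewrite pG.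
  by have [] := cc_mul_ge0 (H t1 M).
by rewrite le0c hIm eqxx hRe.
Qed.

Lemma unital : toeplitz (fun _ : R => 1 : C) = @idop R.
Proof.
apply/funext => i; apply/funext => j; rewrite /toeplitz /idop fourierE.
rewrite (@CI_ext _ _ (fun t => expi (((j%:Z - i%:Z)%:~R : R) * t))); last first.
  by move=> t _; rewrite mul1r -mulNr -intrN opprB.
rewrite CI_expi.
have [->|ne] := eqVneq i j.
  rewrite subrr eqxx /=; apply: cplx_eq; rewrite ?ReM ?ImM /= ?mul1r ?mulr0 ?mul0r ?subr0 ?addr0 //.
  by rewrite mulVf // (gt_eqF (pi2_gt0 R)).
have -> : (j%:Z - i%:Z == 0) = false by rewrite subr_eq0 eqz_nat eq_sym (negbTE ne).
by rewrite /= mul0r mulr0.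
Qed.

Lemma per_Cn n (f : R -> C) : in_Cn n f -> forall t, f (t + 2 * pi) = f t.
Proof. by move=> [[_ [_ h]] _]. Qed.

Lemma inj_Cn n (f g : R -> C) : in_Cn n f -> in_Cn n g -> toeplitz f = toeplitz g -> f = g.
Proof.
move=> hf hg E.
have cf := ccont_Cn hf; have cg := ccont_Cn hg.
have hk : forall k, fourier f k = fourier g k.
  case=> m.
    by have := congr1 (fun T => T m 0%N) E; rewrite /toeplitz subr0.
  by have := congr1 (fun T => T 0%N m.+1) E; rewrite /toeplitz sub0r -NegzE.
have ch : ccont (fun t => -1 * g t + f t) by apply: ccontD => //; apply: ccontM => //; apply: ccontC.
have hp : forall t, -1 * g (t + 2 * pi) + f (t + 2 * pi) = -1 * g t + f t.
  by move=> t; rewrite (per_Cn hf) (per_Cn hg).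
have h0 : forall k, fourier (fun t => -1 * g t + f t) k = 0.
  by move=> k; rewrite fourier_lin // hk; ring.
have H := @uniq_fourier R (fun t => -1 * g t + f t) ch hp h0. apply/funext => t; have := H t => /eqP; rewrite mulN1r addrC subr_eq0 => /eqP.
by [].
Qed.

End Final.

Unset Implicit Arguments.

Theorem proposition4p1 (R : realType) (n : nat) :
  [/\ (* phi_n is linear *)
      (forall (f g : circfun R) (c : R[i]), in_Cn n f -> in_Cn n g ->
         toeplitz (fun t => c * f t + g t) = (fun i j => c * toeplitz f i j + toeplitz g i j)),
      (* phi_n is injective (hence a bijection onto T_(n) = its image) *)
      (forall f g : circfun R, in_Cn n f -> in_Cn n g -> toeplitz f = toeplitz g -> f = g),
      (* phi_n is unital *)
      toeplitz (fun _ : R => 1) = @idop R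
    & (* phi_n and its inverse are completely positive *)
      forall (p : nat) (F : 'I_p -> 'I_p -> circfun R),
        (forall a b, in_Cn n (F a b)) ->
        (fun_block_pos F <-> op_block_pos (fun a b => toeplitz (F a b)))].
Proof.
split.
- move=> f g c hf hg; apply/funext => i; apply/funext => j.
  by rewrite /toeplitz fourier_lin //; [apply: (ccont_Cn hf) | apply: (ccont_Cn hg)].
- exact: inj_Cn.
- exact: unital.
- move=> p F hF; split.
  + by apply: cp_fwd => a b; apply: (ccont_Cn (hF a b)).
  + apply: cp_back => [a b|a b]; first exact: (ccont_Cn (hF a b)).
    exact: (per_Cn (hF a b)).
Qed.
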